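(* Let $m\ge 2$ be an integer and let $G$ be a graph without isolated vertices containing no induced subgraph isomorphic to $K_{1,m}$. Then $\tilde{H}_k(\operatorname{ind}(G);\mathbf{k})=0$ for all \[k\le\left\lceil\frac{\dim(\operatorname{ind}(G))-2m+3}{m-1}\right\rceil.\]
   Context: All graphs are finite and simple; $\mathbf{k}$ is a fixed field. $K_{1,m}$ is the complete bipartite graph with parts of sizes $1$ and $m$. $\operatorname{ind}(G)$ is the simplicial complex on $V(G)$ whose faces are the independent sets of $G$; its dimension is one less than the maximum size of an independent set. $\tilde H_k$ denotes reduced simplicial homology with coefficients in $\mathbf{k}$. *)

(* Defs.v *)
From HB Require Import structures.
From mathcomp Require Import all_boot all_order all_algebra.
Set Implicit Arguments. Unset Strict Implicit. Unset Printing Implicit Defensive.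
Import Order.TTheory GRing.Theory Num.Theory.
Local Open Scope ring_scope.

Definition simple_graph (T : finType) (e : rel T) : Prop :=
  symmetric e /\ irreflexive e.

Definition no_isolated (T : finType) (e : rel T) : Prop :=
  forall v : T, exists u : T, e v u.

(* the star K_{1,m}: vertex set option 'I_m, center None, leaves Some i *)
Definition star_adj (m : nat) : rel (option 'I_m) :=
  fun x y => (x == None) != (y == None).

Definition has_induced_star (T : finType) (e : rel T) (m : nat) : Prop :=
  exists f : option 'I_m -> T,
    injective f /\ forall x y, e (f x) (f y) = star_adj x y.

Definition independent (T : finType) (e : rel T) (A : {set T}) : bool :=
  [forall x in A, forall y in A, ~~ e x y].

Definition ind_complex (T : finType) (e : rel T) : {set {set T}} :=
  [set A : {set T} | independent e A].

Definition cdim (T : finType) (D : {set {set T}}) : int :=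
  (\max_(A in D) #|A|)%:Z - 1.

(* Faces are ordered by the
   enumeration order of T; a k-simplex is a face with k+1 vertices, and the
   empty face is the unique (-1)-simplex (augmented = reduced complex). *)
Definition chain (F : fieldType) (T : finType) := {ffun {set T} -> F}.

Definition bsign (F : fieldType) (T : finType) (s : {set T}) (v : T) : F :=
  (-1) ^+ #|[set u in s | enum_rank u < enum_rank v]|%N.

Definition boundary (F : fieldType) (T : finType) (c : chain F T) : chain F T :=
  [ffun t : {set T} =>
     \sum_(s : {set T}) \sum_(v in s | t == s :\ v) bsign F s v * c s].

Definition is_kchain (F : fieldType) (T : finType) (D : {set {set T}})
    (k : int) (c : chain F T) : Prop :=
  forall s : {set T}, c s != 0 -> s \in D /\ (#|s|%:Z = k + 1).

Definition reduced_homology_vanishes (F : fieldType) (T : finType)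
    (D : {set {set T}}) (k : int) : Prop :=
  forall c : chain F T, is_kchain D k c -> boundary c = 0 ->
    exists d : chain F T, is_kchain D (k + 1) d /\ boundary d = c.

(* Main.v *)
Require Import Defs.
From HB Require Import structures.
From mathcomp Require Import all_boot all_order all_algebra ring zify lra.
Import Order.TTheory GRing.Theory Num.Theory.
Set Implicit Arguments. Unset Strict Implicit. Unset Printing Implicit Defensive.
Local Open Scope ring_scope.

Definition cone (F : fieldType) (T : finType) (v : T) (c : chain F T) : chain F T :=
  [ffun s : {set T} => if v \in s then bsign F s v * c (s :\ v) else 0].

Lemma coneE (F : fieldType) (T : finType) (v : T) (c : chain F T) s :
  cone v c s = if v \in s then bsign F s v * c (s :\ v) else 0.
Proof. by rewrite ffunE. Qed.
Lemma oppE (F : fieldType) (T : finType) (c : chain F T) s : (- c) s = - c s.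
Proof. by rewrite ffunE. Qed.
Lemma addE (F : fieldType) (T : finType) (c d : chain F T) s : (c + d) s = c s + d s.
Proof. by rewrite ffunE. Qed.

Lemma sign_sq (F : fieldType) (n : nat) : (-1) ^+ n * (-1) ^+ n = 1 :> F.
Proof. by rewrite -exprD addnn -mul2n exprM sqrrN !expr1n. Qed.

Lemma card_U1_pred (T : finType) (u : T) (t : {set T}) (P : pred T) : u \notin t ->
  #|[set w in u |: t | P w]| = (P u + #|[set w in t | P w]|)%N.
Proof.
move=> ut; case Pu: (P u) => /=.
  have -> : [set w in u |: t | P w] = u |: [set w in t | P w].
    by apply/setP => w; rewrite !inE; case: eqP => // ->; rewrite Pu.
  by rewrite cardsU1 inE (negbTE ut).
rewrite add0n; apply: eq_card => w; rewrite !inE; case: eqP => // ->; by rewrite Pu (negbTE ut).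
Qed.

Lemma sign_id (F : fieldType) (T : finType) (t : {set T}) (u v : T) :
  u \notin t -> v \in t ->
  bsign F (u |: t) u * bsign F (u |: t) v = - (bsign F t v * bsign F (u |: (t :\ v)) u).
Proof.
move=> ut vt.
have uv : u != v by apply: contraNneq ut => ->.
have ut' : u \notin t :\ v by rewrite inE negb_and ut orbT.
have tE : t = v |: (t :\ v) by rewrite setD1K.
rewrite /bsign !card_U1_pred // ltnn add0n.
rewrite {1}tE card_U1_pred ?setD11 //.
have : enum_rank u != enum_rank v by rewrite (inj_eq enum_rank_inj).
case: (ltngtP (enum_rank u) (enum_rank v)) => [_ _|_ _|]; last by move=> E; case/negP; apply/eqP; apply: val_inj.
  by rewrite /= add0n add1n exprS mulN1r mulrN mulrC.
by rewrite /= add0n add1n exprS mulN1r mulNr mulrC.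
Qed.

Lemma bd_formula (F : fieldType) (T : finType) (c : chain F T) (t : {set T}) :
  boundary c t = \sum_(u | u \notin t) bsign F (u |: t) u * c (u |: t).
Proof.
rewrite ffunE (exchange_big_dep xpredT) //=.
rewrite (bigID (fun u => u \in t)) /= big1 ?add0r; last first.
  move=> u ut; rewrite big_pred0 // => s; apply/andP => -[us /eqP tE].
  by move: ut; rewrite tE !inE eqxx.
apply: eq_bigr => u ut.
rewrite (big_pred1 (u |: t)) // => s /=.
apply/andP/eqP => [[us /eqP ->]|->]; first by rewrite setD1K.
by rewrite setU11 setU1K // eqxx.
Qed.

Lemma bd_cone (F : fieldType) (T : finType) (v : T) (c : chain F T) :
  (forall s : {set T}, v \in s -> c s = 0) ->
  boundary (cone v c) = c - cone v (boundary c).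
Proof.
move=> cv; apply/ffunP => t; rewrite bd_formula addE oppE coneE.
case: (boolP (v \in t)) => vt.
  rewrite cv // sub0r bd_formula.
  rewrite [in RHS](bigD1 v) /=; last by rewrite !inE eqxx.
  rewrite setD1K // cv // mulr0 add0r mulr_sumr -sumrN.
  rewrite [in RHS](eq_bigl (fun u => u \notin t)); last first.
    move=> u; rewrite !inE; case: (u =P v) => [->|] //=; [symmetry; apply/negbTE; rewrite negbK; exact: vt | by rewrite andbT].
  apply: eq_bigr => u ut.
  have uv : u != v by apply: contraNneq ut => ->.
  rewrite coneE setU1r //.
  have -> : (u |: t) :\ v = u |: (t :\ v).
    by apply/setP => w; rewrite !inE; case: (w =P u) => [->|]; rewrite ?uv ?andbT.
  by rewrite mulrA sign_id // mulNr mulrA.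
rewrite subr0 (bigD1 v) //= coneE setU11 setU1K // mulrA sign_sq mul1r.
rewrite big1 ?addr0 // => u /andP [ut uv].
by rewrite coneE !inE (negbTE vt) eq_sym (negbTE uv) mulr0.
Qed.

Lemma zeroE (F : fieldType) (T : finType) s : (0 : chain F T) s = 0.
Proof. by rewrite ffunE. Qed.

Lemma bd_add (F : fieldType) (T : finType) (a b : chain F T) :
  boundary (a + b) = boundary a + boundary b.
Proof.
apply/ffunP => t; rewrite addE !bd_formula -big_split; apply: eq_bigr => u _.
by rewrite addE mulrDr.
Qed.

Lemma bd_opp (F : fieldType) (T : finType) (a : chain F T) :
  boundary (- a) = - boundary a.
Proof.
apply/ffunP => t; rewrite oppE !bd_formula -sumrN; apply: eq_bigr => u _.
by rewrite oppE mulrN.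
Qed.

Lemma bd0 (F : fieldType) (T : finType) : boundary (0 : chain F T) = 0.
Proof. by apply/ffunP => t; rewrite bd_formula zeroE big1 // => u _; rewrite zeroE mulr0. Qed.

Lemma cone_opp (F : fieldType) (T : finType) v (a : chain F T) : cone v (- a) = - cone v a.
Proof. by apply/ffunP => s; rewrite oppE !coneE oppE; case: ifP; rewrite ?mulrN ?oppr0. Qed.

Lemma cone0 (F : fieldType) (T : finType) v : cone v (0 : chain F T) = 0.
Proof. by apply/ffunP => s; rewrite zeroE coneE zeroE mulr0; case: ifP. Qed.

Definition res (F : fieldType) (T : finType) (v : T) (c : chain F T) : chain F T :=
  [ffun s : {set T} => if v \in s then 0 else c s].
Definition lnk (F : fieldType) (T : finType) (v : T) (c : chain F T) : chain F T :=
  [ffun s : {set T} => if v \in s then 0 else bsign F (v |: s) v * c (v |: s)].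

Lemma resE (F : fieldType) (T : finType) v (c : chain F T) s :
  res v c s = if v \in s then 0 else c s.
Proof. by rewrite ffunE. Qed.
Lemma lnkE (F : fieldType) (T : finType) v (c : chain F T) s :
  lnk v c s = if v \in s then 0 else bsign F (v |: s) v * c (v |: s).
Proof. by rewrite ffunE. Qed.

Lemma decomp (F : fieldType) (T : finType) v (c : chain F T) :
  c = res v c + cone v (lnk v c).
Proof.
apply/ffunP => s; rewrite addE resE coneE lnkE setD11.
case: (boolP (v \in s)) => vs; last by rewrite addr0.
by rewrite add0r setD1K // mulrA sign_sq mul1r.
Qed.

Lemma cycle_parts (F : fieldType) (T : finType) v (c : chain F T) :
  boundary c = 0 -> boundary (lnk v c) = 0 /\ boundary (res v c) = - lnk v c.
Proof.
move=> hc.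
have lv : forall s : {set T}, v \in s -> lnk v c s = 0 by move=> s vs; rewrite lnkE vs.
have E := congr1 (@boundary F T) (decomp v c).
rewrite hc bd_add bd_cone // in E.
have h1 : boundary (lnk v c) = 0.
  apply/ffunP => s; rewrite zeroE.
  case: (boolP (v \in s)) => vs.
    rewrite bd_formula big1 // => u _; by rewrite lv ?mulr0 // setU1r.
  have := congr1 (fun f : chain F T => f (v |: s)) E; rewrite /= zeroE !addE oppE coneE.
  rewrite lnkE !inE eqxx /= setU1K // add0r.
  rewrite [boundary (res v c) _]bd_formula big1 ?add0r; last first.
    by move=> u _; rewrite resE !inE eqxx orbT mulr0.
  move/esym/eqP; rewrite oppr_eq0 mulf_eq0 => /orP [|/eqP //].
  by rewrite /bsign expf_eq0 oppr_eq0 oner_eq0 andbF.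
split=> //.
rewrite h1 cone0 subr0 in E.
by apply/eqP; rewrite -addr_eq0 -E.
Qed.

Definition indep_in (T : finType) (e : rel T) (W : {set T}) : {set {set T}} :=
  [set A : {set T} | (A \subset W) && independent e A].

Lemma indepP (T : finType) (e : rel T) (A : {set T}) :
  reflect (forall x y, x \in A -> y \in A -> ~~ e x y) (independent e A).
Proof.
apply: (iffP forallP) => [h x y hx hy | h x].
  by move: (h x); rewrite hx /= => /forallP /(_ y); rewrite hy.
apply/implyP => hx; apply/forallP => y; apply/implyP => hy; exact: h.
Qed.

Lemma indep_add (T : finType) (e : rel T) v (A : {set T}) : simple_graph e ->
  independent e A -> (forall u, u \in A -> ~~ e v u) -> independent e (v |: A).
Proof.
move=> [sym irr] /indepP iA hv; apply/indepP => x y; rewrite !inE.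
case/orP => [/eqP ->|xA]; case/orP => [/eqP ->|yA].
- by rewrite irr.
- exact: hv.
- by rewrite sym; exact: hv.
- exact: iA.
Qed.

Lemma trivial_vanish (F : fieldType) (T : finType) (D : {set {set T}}) (k : int) :
  k + 1 < 0 -> reduced_homology_vanishes F D k.
Proof.
move=> hk c hc _; exists 0; split; first by move=> s; rewrite zeroE eqxx.
have -> : c = 0.
  apply/ffunP => s; rewrite zeroE; apply/eqP; apply: contraT => hs.
  have [_ hsz] := hc s hs.
  by move: hk; rewrite -hsz.
exact: bd0.
Qed.

Lemma cone_chain (F : fieldType) (T : finType) (e : rel T) (W : {set T}) v (j : int)
    (X : chain F T) : simple_graph e -> v \in W ->
  (forall s, X s != 0 -> [/\ s \subset W, independent e s,
     (forall u, u \in s -> ~~ e v u) & #|s|%:Z = j + 1]) ->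
  is_kchain (indep_in e W) (j + 1) (cone v X).
Proof.
move=> sg vW hX s; rewrite coneE; case: ifP => vs; last by rewrite eqxx.
rewrite mulf_eq0 negb_or => /andP [_ /hX [sW si sv sz]].
split.
  rewrite inE -(setD1K vs); apply/andP; split.
    by rewrite subUset sub1set vW (subset_trans sW) ?subsetDl.
  by apply: indep_add.
by rewrite (cardsD1 v s) vs PoszD sz addrC.
Qed.

Lemma cone_vanish (F : fieldType) (T : finType) (e : rel T) (W : {set T}) v (k : int) :
  simple_graph e -> v \in W -> (forall u, u \in W -> ~~ e v u) ->
  reduced_homology_vanishes F (indep_in e W) k.
Proof.
move=> sg vW iso c hc bc; case: (cycle_parts v bc) => _ hres.
exists (cone v (res v c)); split.
  apply: cone_chain => // s; rewrite resE; case: ifP => vs; first by rewrite eqxx.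
  move=> /hc []; rewrite inE => /andP [sW si] sz; split => // u us.
  by apply: iso; exact: (subsetP sW).
rewrite bd_cone; last by move=> s vs; rewrite resE vs.
by rewrite hres cone_opp opprK (esym (decomp v c)).
Qed.

Lemma decomp_vanish (F : fieldType) (T : finType) (e : rel T) (W : {set T}) v (k : int) :
  simple_graph e -> v \in W ->
  reduced_homology_vanishes F (indep_in e (W :\ v)) k ->
  reduced_homology_vanishes F (indep_in e (W :\: (v |: [set u | e v u]))) (k - 1) ->
  reduced_homology_vanishes F (indep_in e W) k.
Proof.
move=> sg vW Hdel Hlk c hc bc; case: (cycle_parts v bc) => bl br.
have c1ch : is_kchain (indep_in e (W :\: (v |: [set u | e v u]))) (k - 1) (lnk v c).
  move=> s; rewrite lnkE; case: ifP => vs; first by rewrite eqxx.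
  rewrite mulf_eq0 negb_or => /andP [_ /hc []].
  rewrite inE => /andP [sW /indepP si] sz; split.
    rewrite inE; apply/andP; split.
      apply/subsetP => u us; rewrite !inE negb_or (subsetP sW) ?inE ?us ?orbT // andbT.
      apply/andP; split.
        by apply/eqP => uv; rewrite -uv us in vs.
      by apply: si; rewrite !inE ?eqxx ?us ?orbT.
    by apply/indepP => x y hx hy; apply: si; rewrite !inE ?hx ?hy ?orbT.
  by move: sz; rewrite cardsU1 vs PoszD /= subrK addrC => /addIr.
have [d1 [d1ch bd1]] := Hlk _ c1ch bl.
have e1 : k - 1 + 1 = k by rewrite subrK.
rewrite e1 in d1ch.
have c'ch : is_kchain (indep_in e (W :\ v)) k (res v c + d1).
  move=> s; rewrite addE; case: (boolP (res v c s == 0)) => [/eqP -> | ].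
    rewrite add0r => /d1ch []; rewrite !inE => /andP [sWN si] sz; split => //.
    rewrite si andbT; apply: subset_trans sWN _; apply/subsetP => u.
    by rewrite !inE negb_or => /andP [/andP [uv _] uW]; rewrite uv uW.
  rewrite resE; case: ifP => vs; first by rewrite eqxx.
  move=> cs _; have [] := hc s cs; rewrite inE => /andP [sW si] sz; split => //.
  rewrite inE si andbT; apply/subsetP => u us; rewrite !inE (subsetP sW _ us) andbT.
  by apply/eqP => uv; rewrite -uv us in vs.
have bc' : boundary (res v c + d1) = 0 by rewrite bd_add br bd1 addNr.
have [d0 [d0ch bd0']] := Hdel _ c'ch bc'.
have d1v : forall s : {set T}, v \in s -> d1 s = 0.
  move=> s vs; apply/eqP; apply: contraT => /d1ch []; rewrite !inE => /andP [sWN _] _.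
  by have := subsetP sWN v vs; rewrite !inE eqxx.
have ccone : is_kchain (indep_in e W) (k + 1) (cone v d1).
  apply: cone_chain => // s /d1ch []; rewrite !inE => /andP [sWN si] sz; split => //.
  - apply: subset_trans sWN _; exact: subsetDl.
  - move=> u us; have := subsetP sWN u us; rewrite !inE negb_or.
    by case/andP => /andP [].
exists (d0 - cone v d1); split.
  move=> s; rewrite addE oppE; case: (boolP (d0 s == 0)) => [/eqP -> | ].
    by rewrite add0r oppr_eq0 => /ccone.
  move=> /d0ch [] ; rewrite !inE => /andP [sW si] sz _; split => //.
  by rewrite (subset_trans sW) ?subsetDl.
rewrite bd_add bd_opp bd_cone // bd0' bd1.
rewrite opprB addrA addrAC addrK.
exact: (esym (decomp v c)).
Qed.

Lemma star_of (T : finType) (e : rel T) (m : nat) v (X : {set T}) : simple_graph e ->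
  (m <= #|X|)%N -> independent e X -> (forall x, x \in X -> e v x) -> has_induced_star e m.
Proof.
move=> [sym irr] hm /indepP iX hv.
have vX : v \notin X by apply/negP => /hv; rewrite irr.
pose s := enum X.
have sz : (m <= size s)%N by rewrite /s -cardE.
have ms : forall i : 'I_m, nth v s i \in X.
  by move=> i; rewrite -mem_enum mem_nth // (leq_trans (ltn_ord i)).
exists (fun o : option 'I_m => if o is Some i then nth v s i else v); split.
  move=> [i|] [j|] //=.
  - move=> /eqP; rewrite nth_uniq ?enum_uniq ?(leq_trans (ltn_ord _) sz) //.
    by move=> /eqP /val_inj ->.
  - by move=> E; move: (ms i); rewrite E (negbTE vX).
  - by move=> E; move: (ms j); rewrite -E (negbTE vX).
move=> [i|] [j|]; rewrite /star_adj /=.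
- by apply/negbTE; apply: iX.
- by rewrite sym hv.
- by rewrite hv.
- by rewrite irr.
Qed.

Lemma main_ind (F : fieldType) (T : finType) (e : rel T) (m : nat) :
  simple_graph e -> (2 <= m)%N -> ~ has_induced_star e m ->
  forall n (W : {set T}), (#|W| <= n)%N -> forall (k : int) (S : {set T}),
   S \subset W -> independent e S -> (m%:Z - 1) * (k + 1) + 1 <= #|S|%:Z ->
   reduced_homology_vanishes F (indep_in e W) k.
Proof.
move=> sg m2 nostar n; elim: n => [|n IH] W hW k S SW iS hS;
  (case: (ltrP (k + 1) 0) => hk; first exact: trivial_vanish).
  have S0 : #|S| = 0%N by apply/eqP; rewrite -leqn0 (leq_trans (subset_leq_card SW)).
  move: hS; rewrite S0.
  have : 0 <= (m%:Z - 1) * (k + 1) by rewrite mulr_ge0 // subr_ge0 lez_nat (ltnW m2).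
  by lia.
case: (set_0Vmem (W :\: S)) => [WS | [v hv]].
  have : (0 < #|S|)%N.
    have : 0 <= (m%:Z - 1) * (k + 1) by rewrite mulr_ge0 // subr_ge0 lez_nat (ltnW m2).
    by move: hS; lia.
  case/card_gt0P => v vS.
  have WsS : W \subset S by rewrite -setD_eq0 WS.
  apply: (cone_vanish (v := v)) => //; first exact: (subsetP SW).
  move=> u uW; move/indepP: iS; apply => //; exact: (subsetP WsS).
move: hv; rewrite inE => /andP [vS vW].
have cW : (#|W :\ v| <= n)%N.
  by move: hW; rewrite (cardsD1 v W) vW.
have SWv : S \subset W :\ v.
  apply/subsetP => u uS; rewrite !inE (subsetP SW _ uS) andbT.
  by apply/eqP => uv; rewrite -uv uS in vS.
apply: (decomp_vanish (v := v)) => //.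
  exact: (IH _ cW k S SWv iS hS).
set N := v |: [set u | e v u].
have cWN : (#|W :\: N| <= n)%N.
  apply: leq_trans cW; apply: subset_leq_card; apply/subsetP => u.
  by rewrite !inE negb_or => /andP [/andP [uv _] uW]; rewrite uv uW.
have small : (#|S :&: N| < m)%N.
  rewrite ltnNge; apply/negP => hm; apply: nostar.
  apply: (star_of (v := v) (X := S :&: N)) => //.
    by apply/indepP => x y /setIP [xS _] /setIP [yS _]; move/indepP: iS; apply.
  move=> x /setIP [xS]; rewrite !inE => /orP [/eqP xv|] //.
  by rewrite -xv xS in vS.
apply: (IH _ cWN (k - 1) (S :\: N)).
- exact: setSD.
- by apply/indepP => x y /setDP [xS _] /setDP [yS _]; move/indepP: iS; apply.
- move: hS; rewrite -(cardsID N S) PoszD.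
  have : (#|S :&: N| <= m.-1)%N by rewrite -ltnS prednK // (ltn_trans _ m2).
  move: (#|S :&: N|) (#|S :\: N|) => a b hab.
  have hm : (m.-1)%:Z = m%:Z - 1 by rewrite -subn1 -subzn // (ltnW m2).
  nia.
Qed.

Unset Implicit Arguments.

Theorem corollary6p11 (F : fieldType) (T : finType) (e : rel T) (m : nat) :
  simple_graph e -> (2 <= m)%N -> no_isolated e -> ~ has_induced_star e m ->
  forall k : int,
    k <= Num.ceil (((cdim (ind_complex e) - 2 * m%:Z + 3)%:~R / (m%:Z - 1)%:~R) : rat) ->
    reduced_homology_vanishes F (ind_complex e) k.
Proof.
move=> sg m2 _ nostar k hk.
have DE : ind_complex e = indep_in e setT.
  by apply/setP => A; rewrite !inE subsetT.
have ne : (0 < #|ind_complex e|)%N.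
  apply/card_gt0P; exists set0; rewrite inE; apply/indepP => x y; by rewrite inE.
have [S SD Smax] := eq_bigmax_cond (fun A : {set T} => #|A|) ne.
move: hk; rewrite /cdim Smax DE => hk.
have iS : independent e S by move: SD; rewrite inE.
apply: (main_ind sg m2 nostar (leqnn _) (subsetT S) iS).
set x := (_ / _ : rat) in hk.
have h1 := ceilB1_lt x.
have h2 : ((k - 1)%:~R : rat) < x.
  apply: le_lt_trans h1; by rewrite ler_int lerD2r.
have mpos : (0 : rat) < (m%:Z - 1)%:~R.
  by rewrite ltr0z subr_gt0 ltz_nat (leq_trans _ m2).
move: h2; rewrite /x ltr_pdivlMr // -intrM ltr_int.
nia.
Qed.
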